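(* Let $R=(r_{ij})$ be a real symmetric $n\times n$ matrix with zero diagonal and $\rho(|R|)<1$, with belief-propagation estimate $Z^{\mathrm{bp}}$ and backtrackless adjacency matrix $R'$ (defined in the context). Then $$\det(I-R)^{-1}=Z^{\mathrm{bp}}\times\det(I-R')^{-1}.$$
   Context: $|R|=(|r_{ij}|)$, $\rho$ the spectral radius. $G$ is the graph on $V=\{1,\dots,n\}$ with undirected edge $\{i,j\}$ whenever $r_{ij}\neq0$; $\partial i$ is the neighbour set of $i$; each undirected edge gives directed edges $(ij),(ji)$. GaBP messages: $\alpha_{ij}=\lim_t\alpha^{(t)}_{ij}$ with $\alpha^{(0)}_{ij}=0$, $\alpha^{(t+1)}_{ij}=r_{ij}^2(1-\sum_{k\in\partial i\setminus j}\alpha^{(t)}_{ki})^{-1}$ (convergent when $\rho(|R|)<1$, with $1-\alpha_{i\setminus j}>0$); $\alpha_{i\setminus j}=\sum_{k\in\partial i\setminus j}\alpha_{ki}$. $Z_i^{\mathrm{bp}}=(1-\sum_{k\in\partial i}\alpha_{ki})^{-1}$, $Z_{ij}^{\mathrm{bp}}=\det\begin{pmatrix}1-\alpha_{i\setminus j} & -r_{ij}\\ -r_{ij} & 1-\alpha_{j\setminus i}\end{pmatrix}^{-1}$, $Z^{\mathrm{bp}}=\prod_{i\in V}Z_i^{\mathrm{bp}}\prod_{\{i,j\}\in G}\frac{Z_{ij}^{\mathrm{bp}}}{Z_i^{\mathrm{bp}}Z_j^{\mathrm{bp}}}$. Let $r'_{ij}=\frac{r_{ij}}{1-\alpha_{i\setminus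 j}}$. The matrix $R'$ has rows and columns indexed by directed edges of $G$, with $R'_{(ij),(kl)}=r'_{kl}$ if $j=k$ and $i\neq l$, and $0$ otherwise. *)

(* Defs.v *)
From HB Require Import structures.
From mathcomp Require Import all_boot all_order all_algebra.
From mathcomp Require Import complex.
From mathcomp Require Import all_classical all_reals topology normedtype sequences.
Set Implicit Arguments. Unset Strict Implicit. Unset Printing Implicit Defensive.
Import Order.TTheory GRing.Theory Num.Theory numFieldNormedType.Exports.
Local Open Scope ring_scope.

Section GaBP.
Variables (R : realType) (n : nat).

Definition eigenvalueC (A : 'M[R]_n) (z : R[i]) : Prop :=
  root (char_poly (map_mx (fun x : R => (x%:C)%C) A)) z.

Definition modC (z : R[i]) : R :=
  Num.sqrt (complex.Re z ^+ 2 + complex.Im z ^+ 2).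

(* spectral radius: largest modulus of a (complex) eigenvalue (0 if n = 0) *)
Definition spectral_radius (A : 'M[R]_n) : R :=
  sup [set x : R | exists z : R[i], eigenvalueC A z /\ x = modC z].

Definition absmx (A : 'M[R]_n) : 'M[R]_n := map_mx (fun x => `|x|) A.

Definition nbr (r : 'M[R]_n) (i k : 'I_n) : bool := r i k != 0.

Fixpoint bp_msg (r : 'M[R]_n) (t : nat) : 'I_n -> 'I_n -> R :=
  match t with
  | 0 => fun _ _ => 0
  | t'.+1 => fun i j =>
      r i j ^+ 2 / (1 - \sum_(k | nbr r i k && (k != j)) bp_msg r t' k i)
  end.

Definition bp_alpha (r : 'M[R]_n) (i j : 'I_n) : R :=
  limn (fun t => bp_msg r t i j).

Definition bp_alpha_excl (r : 'M[R]_n) (i j : 'I_n) : R :=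
  \sum_(k | nbr r i k && (k != j)) bp_alpha r k i.

Definition Zbp_node (r : 'M[R]_n) (i : 'I_n) : R :=
  (1 - \sum_(k | nbr r i k) bp_alpha r k i)^-1.

Definition Zbp_edge (r : 'M[R]_n) (i j : 'I_n) : R :=
  (\det (\matrix_(a < 2, b < 2)
      (if (val a == 0%N) && (val b == 0%N) then 1 - bp_alpha_excl r i j
       else if (val a == 1%N) && (val b == 1%N) then 1 - bp_alpha_excl r j i
       else - r i j)))^-1.

(* undirected edges {i,j} of G are enumerated once as pairs i < j *)
Definition Zbp (r : 'M[R]_n) : R :=
  (\prod_i Zbp_node r i) *
  \prod_(p : 'I_n * 'I_n | (p.1 < p.2)%N && nbr r p.1 p.2)
     (Zbp_edge r p.1 p.2 / (Zbp_node r p.1 * Zbp_node r p.2)).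

Definition dedges (r : 'M[R]_n) : {set 'I_n * 'I_n} :=
  [set p | nbr r p.1 p.2].

Definition rprime (r : 'M[R]_n) (k l : 'I_n) : R :=
  r k l / (1 - bp_alpha_excl r k l).

(* backtrackless matrix R', rows/columns indexed by directed edges
   (enumerated through enum_val) *)
Definition Rprime (r : 'M[R]_n) : 'M[R]_#|dedges r| :=
  \matrix_(a, b)
    (let e := enum_val a in let f := enum_val b in
     if (e.2 == f.1) && (e.1 != f.2) then rprime r f.1 f.2 else 0).

End GaBP.

(* Main.v *)
Require Import Defs.
From HB Require Import structures.
From mathcomp Require Import all_boot all_order all_algebra.
From mathcomp Require Import complex.
From mathcomp Require Import all_classical all_reals topology normedtype sequences.
From mathcomp Require Import fingroup perm polyrcf.
From mathcomp Require Import ring lra.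
Import Order.TTheory GRing.Theory Num.Theory numFieldNormedType.Exports.
Local Open Scope classical_set_scope.
Local Open Scope ring_scope.
Set Implicit Arguments. Unset Strict Implicit. Unset Printing Implicit Defensive.


Section Idx.
Variables (R : realType) (n : nat) (r : 'M[R]_n).
Hypothesis Hsym : forall i j, r i j = r j i.
Hypothesis Hdiag : forall i, r i i = 0.

Definition ev (e : 'I_#|dedges r|) : 'I_n * 'I_n := enum_val e.
Lemma evP e : nbr r (ev e).1 (ev e).2.
Proof. by have := enum_valP e; rewrite inE. Qed.
Definition rev (e : 'I_#|dedges r|) : 'I_#|dedges r| :=
  enum_rank_in (enum_valP e) ((ev e).2, (ev e).1).
Lemma ev_rev e : ev (rev e) = ((ev e).2, (ev e).1).
Proof.
rewrite /rev /ev enum_rankK_in // inE /nbr -Hsym; exact: evP.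
Qed.
Lemma ev_inj : injective ev.
Proof. exact: enum_val_inj. Qed.
Lemma revK : involutive rev.
Proof. by move=> e; apply: ev_inj; rewrite !ev_rev; case: (ev e). Qed.
Lemma ev_neq e : (ev e).1 != (ev e).2.
Proof. apply/eqP=> h; have := evP e; rewrite /nbr h Hdiag eqxx. by []. Qed.
Lemma rev_neq e : (rev e == e) = false.
Proof.
apply/negbTE/eqP=> h; move: (ev_neq e) (congr1 ev h); rewrite ev_rev.
by case: (ev e) => a b /= /negbTE ab [] ba; rewrite ba eqxx in ab.
Qed.
End Idx.

Lemma sum_delta (T : pzRingType) (I : finType) (a : I) (F : I -> T) :
  \sum_j (a == j)%:R * F j = F a.
Proof.
rewrite (bigD1 a) //= eqxx mul1r big1 ?addr0 // => j ja.
by rewrite eq_sym (negbTE ja) mul0r.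
Qed.

Lemma det_schur (T : comRingType) k l (P : 'M[T]_k) (Tt : 'M[T]_(k, l)) (SU : 'M[T]_(l, k)) W :
  P *m W = 1%:M -> \det (P - Tt *m SU) = \det P * \det (1%:M - SU *m W *m Tt).
Proof.
move=> PW.
have e1 : block_mx P Tt SU 1%:M =
   block_mx 1%:M Tt 0 1%:M *m block_mx (P - Tt *m SU) 0 SU 1%:M.
  by rewrite mulmx_block !mul1mx !mulmx0 !mul0mx !mulmx1 !add0r subrK.
have e2 : block_mx P Tt SU 1%:M =
   block_mx P 0 SU (1%:M - SU *m W *m Tt) *m block_mx 1%:M (W *m Tt) 0 1%:M.
  rewrite mulmx_block !mulmx1 !mul0mx !mulmx0 !addr0 mulmxA PW mul1mx.
  by rewrite mulmxA addrC subrK.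
have := congr1 determinant e2; rewrite {1}e1 !det_mulmx det_ublock det_lblock.
by rewrite det_lblock det_ublock !det1 !mul1r !mulr1.
Qed.

Lemma det_tri (T : comRingType) k (M : 'M[T]_k) (q : pred 'I_k) :
  (forall e f, e != f -> ~~ (q e && ~~ q f) -> M e f = 0) ->
  \det M = \prod_e M e e.
Proof.
move=> h; rewrite /determinant (bigD1 (1%g : 'S_k)) //= [X in _ + X]big1 ?addr0.
  by rewrite odd_perm1 expr0 mul1r; apply: eq_bigr => i _; rewrite perm1.
move=> s hs.
have [j hj] : exists j, s j != j.
  apply/existsP; apply: contraR hs => /existsPn hall; apply/eqP/permP => x.
  by rewrite perm1; apply/eqP; move: (hall x); rewrite negbK.
have zero : forall x, x != s x -> ~~ (q x && ~~ q (s x)) ->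
    (-1) ^+ s * \prod_i M i (s i) = 0.
  move=> x h1 h2; rewrite (bigD1 x) //= h // mul0r mulr0 //.
case hq: (q j && ~~ q (s j)).
  move/andP: hq => [_ hq].
  apply: (zero (s j)).
    by apply: contra hj => /eqP/perm_inj hh; rewrite -hh.
  by rewrite (negbTE hq).
by apply: (zero j); rewrite ?hq // eq_sym.
Qed.

Lemma det2 (T : comRingType) (M : 'M[T]_2) : \det M = M 0 0 * M 1 1 - M 0 1 * M 1 0.
Proof.
rewrite (expand_det_row _ 0) !big_ord_recl big_ord0 addr0 /cofactor !det_mx11 !mxE /=.
have -> : lift 0 0 = 1 :> 'I_2 by apply: val_inj.
have -> : lift 1 0 = 0 :> 'I_2 by apply: val_inj.
have -> : ord0 = 0 :> 'I_2 by apply: val_inj.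
rewrite /bump /= expr0 expr1 mul1r mulN1r mulrN.
done.
Qed.

Section Alg.
Variables (R : realType) (n : nat) (r : 'M[R]_n).
Hypothesis Hsym : forall i j, r i j = r j i.
Hypothesis Hdiag : forall i, r i i = 0.
Local Notation a := (bp_alpha r).
Local Notation d i j := (1 - bp_alpha_excl r i j).
Local Notation s i := (\sum_(k | nbr r i k) bp_alpha r k i).
Local Notation rp := (rprime r).
Hypothesis Hfix : forall i j, nbr r i j -> a i j * d i j = r i j ^+ 2.
Hypothesis Hd : forall i j, nbr r i j -> d i j != 0.
Hypothesis Hs : forall i, 1 - s i != 0.

Lemma nbr_sym i j : nbr r i j = nbr r j i.
Proof. by rewrite /nbr Hsym. Qed.

Lemma d_s i j : nbr r i j -> d i j = 1 - s i + a j i.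
Proof.
move=> hij; rewrite (bigD1 j) //= /bp_alpha_excl.
by rewrite (eq_bigl (fun k => nbr r i k && (k != j))); first ring.
Qed.

Lemma E0 i k : nbr r i k -> 1 - rp i k * rp k i = (1 - s i) / d i k.
Proof.
move=> hik; have hki : nbr r k i by rewrite nbr_sym.
have h1 := d_s hik; have h2 := Hfix hki.
have n1 := Hd hik; have n2 := Hd hki.
rewrite /rprime -(Hsym i k).
move: n1 n2 h1 h2; set D1 := d i k; set D2 := d k i => n1 n2 h1 h2.
rewrite -[r k i]Hsym in h2.
apply: (@mulIf _ (D1 * D2)); first by rewrite mulf_neq0.
rewrite mulrBl mul1r.
have -> : r i k / D1 * (r i k / D2) * (D1 * D2) = r i k ^+ 2.
  by field; rewrite n2 n1.
by rewrite -h2 h1; field; rewrite -h1.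
Qed.

Local Notation m := #|dedges r|.
Local Notation ev := (@ev R n r).
Local Notation rev := (@rev R n r).
Definition u (e : 'I_m) := rp (ev e).1 (ev e).2.
Definition Pm : 'M[R]_m := \matrix_(e, f) ((e == f)%:R + (f == rev e)%:R * u f).
Definition Tt : 'M[R]_(m, n) := \matrix_(e, j) ((ev e).2 == j)%:R.
Definition SU : 'M[R]_(n, m) := \matrix_(i, f) (((ev f).1 == i)%:R * u f).

Lemma eq_rev e f : (f == rev e) = ((ev f).1 == (ev e).2) && ((ev f).2 == (ev e).1).
Proof. by rewrite -(inj_eq (@ev_inj _ _ r)) ev_rev // xpair_eqE. Qed.

Lemma L1 : 1%:M - Rprime r = Pm - Tt *m SU.
Proof.
apply/matrixP => e f; rewrite !mxE.
under eq_bigr do rewrite !mxE.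
rewrite sum_delta eq_rev.
rewrite -/(ev e) -/(ev f) /u.
case: (ev e) (ev f) => [x y] [z w] /=.
case: (y =P z) => [<-|/eqP yz]; rewrite ?eqxx /=.
  case: (x =P w) => [<-|/eqP xw]; rewrite ?eqxx /=; first ring.
  by rewrite [w == x]eq_sym (negbTE xw) /=; ring.
by rewrite [z == y]eq_sym (negbTE yz) /=; ring.
Qed.

Definition Dn e := 1 - u e * u (rev e).
Lemma u_rev e : u (rev e) = rp (ev e).2 (ev e).1.
Proof. by rewrite /u ev_rev. Qed.
Lemma Dn_rev e : Dn (rev e) = Dn e.
Proof. by rewrite /Dn revK // mulrC. Qed.
Lemma Dn_E e : Dn e = (1 - s (ev e).1) / d (ev e).1 (ev e).2.
Proof. by rewrite /Dn u_rev /u E0 //; exact: evP. Qed.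
Lemma Dn_neq0 e : Dn e != 0.
Proof. by rewrite Dn_E mulf_neq0 // invr_eq0 Hd //; exact: evP. Qed.

Definition Wm : 'M[R]_m :=
  \matrix_(g, f) (((g == f)%:R - (f == rev g)%:R * u f) / Dn g).

Lemma PW : Pm *m Wm = 1%:M.
Proof.
apply/matrixP => e f; rewrite !mxE.
under eq_bigr do rewrite !mxE mulrDl [_ == rev e]eq_sym -mulrA.
rewrite big_split /= !sum_delta revK // Dn_rev //.
have hn := Dn_neq0 e; move: hn; rewrite /Dn => hn.
have rne := rev_neq Hsym Hdiag e; have ern : (e == rev e) = false by rewrite eq_sym.
case: (f =P e) => [->|/eqP fe].
  by rewrite eqxx ?ern ?rne /=; field.
have fe' : (e == f) = false by rewrite eq_sym (negbTE fe).
case: (f =P rev e) => [->|/eqP fr].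
  by rewrite eqxx ?ern /=; field.
have fr' : (rev e == f) = false by rewrite eq_sym (negbTE fr).
by rewrite ?fe' ?fr' ?(negbTE fr) ?(negbTE fe) /=; field.
Qed.

Definition pos (e : 'I_m) := ((ev e).1 < (ev e).2)%N.
Lemma pos_rev e : pos (rev e) = ~~ pos e.
Proof.
rewrite /pos ev_rev //=; have := ev_neq Hdiag e.
case: (ev e) => x y /= xy; rewrite ltnNge leq_eqVlt negb_or.
by move: xy; rewrite -(inj_eq val_inj) /= => ->.
Qed.

Definition Lm : 'M[R]_m :=
  \matrix_(e, f) ((e == f)%:R + (~~ pos e)%:R * (f == rev e)%:R * u f).
Definition Xm : 'M[R]_m :=
  \matrix_(e, f) ((e == f)%:R * (1 - (~~ pos e)%:R * (u (rev e) * u e))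
                  + (pos e)%:R * (f == rev e)%:R * u f).

Lemma LX : Lm *m Xm = Pm.
Proof.
apply/matrixP => e f; rewrite !mxE.
under eq_bigr do rewrite [Lm _ _]mxE mulrDl.
rewrite big_split /= sum_delta.
have -> : \sum_g (~~ pos e)%:R * (g == rev e)%:R * u g * Xm g f =
          \sum_g (rev e == g)%:R * ((~~ pos e)%:R * u g * Xm g f).
  by apply: eq_bigr => g _; rewrite eq_sym; ring.
rewrite sum_delta !mxE pos_rev revK //.
have rne := rev_neq Hsym Hdiag e; have ern : (e == rev e) = false by rewrite eq_sym.
case: (f =P e) => [->|/eqP fe].
  by rewrite eqxx ?ern ?rne /=; case: (pos e) => /=; ring.
have fe' : (e == f) = false by rewrite eq_sym (negbTE fe).
case: (f =P rev e) => [->|/eqP fr].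
  by rewrite eqxx ?ern /=; case: (pos e) => /=; ring.
have fr' : (rev e == f) = false by rewrite eq_sym (negbTE fr).
by rewrite ?fe' ?fr' ?(negbTE fr) ?(negbTE fe) /=; case: (pos e) => /=; ring.
Qed.

Lemma det_Pm : \det Pm = \prod_e (1 - (~~ pos e)%:R * (u (rev e) * u e)).
Proof.
rewrite -LX det_mulmx.
rewrite (@det_tri _ _ Lm (fun e => ~~ pos e)); last first.
  move=> e f ef hq; rewrite mxE (negbTE ef) add0r.
  case: (f =P rev e) => [fr|_]; last by rewrite mulr0 mul0r.
  by move: hq; rewrite fr pos_rev negbK andbb; case: (pos e) => //= _; rewrite !mul0r.
rewrite (@det_tri _ _ Xm pos); last first.
  move=> e f ef hq; rewrite mxE (negbTE ef) mul0r add0r.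
  case: (f =P rev e) => [fr|_]; last by rewrite mulr0 mul0r.
  by move: hq; rewrite fr pos_rev negbK andbb; case: (pos e) => //= _; rewrite !mul0r.
rewrite big1 ?mul1r; last by move=> e _; rewrite mxE eqxx eq_sym (rev_neq Hsym Hdiag) mulr0 mul0r addr0.
by apply: eq_bigr => e _; rewrite mxE eqxx mul1r eq_sym (rev_neq Hsym Hdiag) mulr0 mul0r addr0.
Qed.

Lemma WT g j : (Wm *m Tt) g j =
  (((ev g).2 == j)%:R - u (rev g) * ((ev g).1 == j)%:R) / Dn g.
Proof.
rewrite mxE.
have -> : \sum_f Wm g f * Tt f j =
   \sum_f (g == f)%:R * (((ev f).2 == j)%:R / Dn g)
   - \sum_f (rev g == f)%:R * (u f * ((ev f).2 == j)%:R / Dn g).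
  by rewrite -sumrB; apply: eq_bigr => f _; rewrite !mxE [f == rev g]eq_sym; ring.
by rewrite !sum_delta ev_rev //=; ring.
Qed.

Lemma term_E i k j : nbr r i k ->
  rp i k * ((k == j)%:R - rp k i * (i == j)%:R) / (1 - rp i k * rp k i)
  = (r i k * (k == j)%:R - (i == j)%:R * a k i) / (1 - s i).
Proof.
move=> hik; have hki : nbr r k i by rewrite nbr_sym.
rewrite E0 //.
have n1 := Hd hik; have n2 := Hd hki; have n3 := Hs i.
have h2 := Hfix hki; rewrite -Hsym in h2.
rewrite /rprime -(Hsym i k).
move: n1 n2 n3 h2; set D1 := d i k; set D2 := d k i; set S := s i => n1 n2 n3 h2.
have ha : a k i = r i k ^+ 2 / D2 by rewrite -h2; field.
by rewrite ha; field; rewrite n3 n2 n1.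
Qed.

Lemma C_entry i j : (SU *m Wm *m Tt) i j =
  r i j / (1 - s i) - (i == j)%:R * (s i / (1 - s i)).
Proof.
rewrite -mulmxA mxE.
pose H (p : 'I_n * 'I_n) := (p.1 == i)%:R * (rp p.1 p.2 *
   ((p.2 == j)%:R - rp p.2 p.1 * (p.1 == j)%:R) / (1 - rp p.1 p.2 * rp p.2 p.1)).
have -> : \sum_g SU i g * (Wm *m Tt) g j = \sum_(g < m) H (ev g).
  apply: eq_bigr => g _; rewrite WT !mxE /H /Dn u_rev /u; ring.
rewrite -(big_enum_val (A := mem (dedges r)) H).
rewrite (eq_bigl (fun p => true && nbr r p.1 p.2)); last by move=> p; rewrite inE.
rewrite -(pair_big_dep predT (fun x y => nbr r x y) (fun x y => H (x, y))) /=.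
rewrite (bigD1 i) //= [X in _ + X]big1 ?addr0; last first.
  by move=> x xi; apply: big1 => y _; rewrite /H /= (negbTE xi) mul0r.
rewrite /H /=.
under eq_bigr => k hk do rewrite eqxx mul1r term_E //.
rewrite -mulr_suml sumrB -mulr_sumr.
have -> : \sum_(k | nbr r i k) r i k * (k == j)%:R = r i j.
  rewrite big_mkcond /=.
  rewrite (eq_bigr (fun k => (j == k)%:R * r i k)); first by rewrite sum_delta.
  move=> k _; case: ifP => [_|]; first by rewrite eq_sym mulrC.
  by rewrite /nbr => /negbFE/eqP ->; rewrite mulr0.
by rewrite mulrBl mulrA.
Qed.

Lemma C_diag : 1%:M - SU *m Wm *m Tt = diag_mx (\row_i (1 - s i)^-1) *m (1%:M - r).
Proof.
apply/matrixP => i j; rewrite mul_diag_mx [LHS]mxE [X in _ + X]mxE C_entry !mxE.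
have := Hs i; set S := s i => h; field; by rewrite h.
Qed.

Lemma det_main : \det (1%:M - Rprime r) =
  \prod_e (1 - (~~ pos e)%:R * (u (rev e) * u e)) *
  (\prod_i (1 - s i)^-1 * \det (1%:M - r)).
Proof.
rewrite L1 (det_schur _ _ PW) det_Pm C_diag det_mulmx det_diag.
by congr (_ * (_ * _)); apply: eq_bigr => i _; rewrite mxE.
Qed.

Lemma d_s' i j : nbr r i j -> d i j * d j i - r i j * r i j = d i j * (1 - s j).
Proof.
move=> hij; have hji : nbr r j i by rewrite nbr_sym.
rewrite (d_s hji) -expr2 -(Hfix hij); ring.
Qed.

Lemma edge_E i j : nbr r i j ->
  Zbp_edge r i j / (Zbp_node r i * Zbp_node r j) = 1 - rp i j * rp j i.
Proof.
move=> hij; have hji : nbr r j i by rewrite nbr_sym.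
rewrite E0 // /Zbp_edge det2 !mxE /= mulrNN d_s' // /Zbp_node.
have n1 := Hd hij; have n2 := Hs i; have n3 := Hs j.
move: n1 n2 n3; set D1 := d i j; set S1 := s i; set S2 := s j => n1 n2 n3.
by field; rewrite n1 n2 n3.
Qed.

Lemma prod_swap :
  \prod_e (1 - (~~ pos e)%:R * (u (rev e) * u e)) =
  \prod_(p : 'I_n * 'I_n | (p.1 < p.2)%N && nbr r p.1 p.2) (1 - rp p.1 p.2 * rp p.2 p.1).
Proof.
rewrite (bigID pos) /= big1 ?mul1r; last by move=> e ->; rewrite mul0r subr0.
pose G (p : 'I_n * 'I_n) := 1 - rp p.2 p.1 * rp p.1 p.2.
rewrite (eq_bigr (fun e => G (ev e))); last first.
  by move=> e ->; rewrite mul1r u_rev.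
rewrite (_ : \prod_(e | ~~ pos e) G (ev e) =
   \prod_(p in dedges r | ~~ (p.1 < p.2)%N) G p); last first.
  by rewrite big_enum_val_cond.
rewrite (reindex_inj (h := fun p : 'I_n * 'I_n => (p.2, p.1))); last first.
  by move=> [x y] [z w] /= [-> ->].
apply: eq_big => [[x y]|[x y] _] //=.
rewrite inE /= nbr_sym.
case hxy: (nbr r x y) => /=; last by rewrite andbF.
have : x != y by apply: contraTneq hxy => ->; rewrite /nbr Hdiag eqxx.
rewrite andbT -leqNgt leq_eqVlt => xy.
by move: xy; rewrite -(inj_eq val_inj) /= => /negbTE ->.
Qed.

Lemma final_alg : (\det (1%:M - r))^-1 = Zbp r * (\det (1%:M - Rprime r))^-1.
Proof.
rewrite det_main prod_swap /Zbp.
rewrite (eq_bigr (fun p : 'I_n * 'I_n => 1 - rp p.1 p.2 * rp p.2 p.1)); last first.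
  by move=> p /andP[_ h]; rewrite edge_E.
have -> : \prod_i Zbp_node r i = \prod_i (1 - s i)^-1 by [].
set c := \prod_(p : 'I_n * 'I_n | (p.1 < p.2)%N && nbr r p.1 p.2) (1 - rp p.1 p.2 * rp p.2 p.1).
set W := \prod_(i < n) (1 - s i)^-1; set D := \det (1%:M - r).
have cn : c != 0.
  apply/prodf_neq0 => p /andP[_ h].
  by rewrite E0 // mulf_neq0 // ?Hs // invr_eq0 Hd.
have Wn : W != 0.
  by apply/prodf_neq0 => i _; rewrite invr_eq0 Hs.
have [->|Dn] := eqVneq D 0; first by rewrite !mulr0 invr0 mulr0.
by field; rewrite Dn Wn cn.
Qed.
End Alg.


Lemma cvg_bigsum (R : realType) (I : eqType) (s : seq I) (P : pred I)
   (f : I -> nat -> R) (l : I -> R) :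
  (forall i, f i @ \oo --> l i) ->
  (fun t => \sum_(i <- s | P i) f i t) @ \oo --> \sum_(i <- s | P i) l i.
Proof.
move=> h; elim: s => [|x s IH].
  rewrite big_nil; under eq_fun do rewrite big_nil; exact: cvg_cst.
rewrite big_cons; under eq_fun do rewrite big_cons.
case: (P x); last exact: IH.
exact: cvgD.
Qed.

Lemma eq_lew (R : realType) (a b : R) : a = b -> a <= b.
Proof. by move=> ->. Qed.

Section Conv.
Variables (R : realType) (n : nat) (r : 'M[R]_n).
Hypothesis Hsym : forall i j, r i j = r j i.
Variable v : 'I_n -> R.
Hypothesis vpos : forall i, 0 < v i.
Hypothesis vfix : forall i, v i = 1 + \sum_j `|r i j| * v j.
Let beta k l := `|r k l| * v k / v l.

Lemma beta_ge0 k l : 0 <= beta k l.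
Proof. by rewrite /beta divr_ge0 // ?mulr_ge0 // ltW. Qed.

Lemma sum_beta i : \sum_k beta k i = (v i - 1) / v i.
Proof.
rewrite /beta -mulr_suml; congr (_ / _).
have -> : v i - 1 = \sum_j `|r i j| * v j by rewrite vfix; ring.
by apply: eq_bigr => k _; rewrite Hsym.
Qed.

Lemma excl_bound (x : 'I_n -> 'I_n -> R) i j :
  (forall k l, 0 <= x k l <= beta k l) ->
  \sum_(k | nbr r i k && (k != j)) x k i <= (v i - 1 - `|r i j| * v j) / v i.
Proof.
move=> hx.
apply: (@le_trans _ _ (\sum_(k | k != j) beta k i)).
  rewrite [X in _ <= X]big_mkcond [X in X <= _]big_mkcond /=.
  apply: ler_sum => k _; case: (nbr r i k) => /=; case: (k != j) => //=.
  - by case/andP: (hx k i).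
  - exact: beta_ge0.
have := sum_beta i; rewrite (bigD1 j) //= => h.
have -> : \sum_(k | k != j) beta k i = (v i - 1) / v i - beta j i by rewrite -h; ring.
rewrite /beta Hsym; have := vpos i => vi; apply: eq_lew; field; by rewrite gt_eqF.
Qed.

Lemma msg_bound (x : 'I_n -> 'I_n -> R) i j :
  (forall k l, 0 <= x k l <= beta k l) ->
  let S := \sum_(k | nbr r i k && (k != j)) x k i in
  0 < 1 - S /\ 0 <= r i j ^+ 2 / (1 - S) <= beta i j.
Proof.
move=> hx S; have hS := excl_bound i j hx; rewrite -/S in hS.
have vi := vpos i; have vj := vpos j.
have hd : (1 + `|r i j| * v j) / v i <= 1 - S.
  apply: (le_trans _ (lerB (lexx 1) hS)); apply: eq_lew; field; by rewrite gt_eqF.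
have p1 : 0 < (1 + `|r i j| * v j) / v i.
  by rewrite divr_gt0 // ltr_pwDl // mulr_ge0 // ltW.
have p2 : 0 < 1 - S by apply: lt_le_trans hd.
split => //; apply/andP; split; first by rewrite divr_ge0 ?sqr_ge0 // ltW.
apply: (@le_trans _ _ (r i j ^+ 2 / ((1 + `|r i j| * v j) / v i))).
  by rewrite ler_wpM2l ?sqr_ge0 // lef_pV2 // posrE.
rewrite /beta -real_normK ?num_real //.
have na := normr_ge0 (r i j); set A := `|r i j| in na *.
rewrite invf_div mulrA ler_pdivrMr; last by rewrite ltr_pwDl // mulr_ge0 // ltW.
have -> : A * v i / v j * (1 + A * v j) = A ^+ 2 * v i + A * v i / v j.
  by field; rewrite gt_eqF.
by rewrite lerDl divr_ge0 ?mulr_ge0 // ltW.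
Qed.

Local Notation msg t := (bp_msg r t).

Lemma msg_bnd t i j : 0 <= msg t i j <= beta i j.
Proof.
elim: t i j => [|t IH] i j /=; first by rewrite lexx beta_ge0.
by case: (msg_bound i j IH).
Qed.

Lemma msg_pos t i j : 0 < 1 - \sum_(k | nbr r i k && (k != j)) msg t k i.
Proof. by case: (msg_bound i j (msg_bnd t)). Qed.

Lemma msg_mono t i j : msg t i j <= msg t.+1 i j.
Proof.
elim: t i j => [|t IH] i j; first by case/andP: (msg_bnd 1 i j).
rewrite [msg t.+2 i j]/= [msg t.+1 i j]/=.
apply: ler_wpM2l; first exact: sqr_ge0.
have p1 := msg_pos t.+1 i j; have p0 := msg_pos t i j.
rewrite lef_pV2 ?posrE //.
by rewrite lerB // ler_sum // => k _; exact: IH.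
Qed.

Lemma alpha_sup i j : bp_alpha r i j = sup (range (fun t => msg t i j)) /\
   (fun t => msg t i j) @ \oo --> bp_alpha r i j.
Proof.
have mono : nondecreasing_seq (fun t => msg t i j).
  by apply/nondecreasing_seqP => t; exact: msg_mono.
have ub : has_ubound (range (fun t => msg t i j)).
  by exists (beta i j) => _ [t _ <-]; case/andP: (msg_bnd t i j).
have h := nondecreasing_cvgn mono ub.
have e : bp_alpha r i j = sup (range (fun t => msg t i j)) by exact: cvg_lim.
by split => //; rewrite e.
Qed.

Lemma alpha_bnd i j : 0 <= bp_alpha r i j <= beta i j.
Proof.
have [e _] := alpha_sup i j; rewrite e; apply/andP; split.
  apply: (@le_trans _ _ (msg 0 i j)) => //.
  apply: ub_le_sup; last by exists 0%N.
  by exists (beta i j) => _ [t _ <-]; case/andP: (msg_bnd t i j).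
apply: ge_sup; first by exists (msg 0 i j), 0%N.
by move=> _ [t _ <-]; case/andP: (msg_bnd t i j).
Qed.

Lemma alpha_fix i j :
  let S := \sum_(k | nbr r i k && (k != j)) bp_alpha r k i in
  0 < 1 - S /\ bp_alpha r i j = r i j ^+ 2 / (1 - S).
Proof.
move=> S; have [hp _] := msg_bound i j alpha_bnd; rewrite -/S in hp.
split => //.
have [_ h1] := alpha_sup i j.
have h2 : (fun t => msg t.+1 i j) @ \oo --> bp_alpha r i j.
  by rewrite (cvg_shiftS (fun t => msg t i j)).
have h3 : (fun t => msg t.+1 i j) @ \oo --> r i j ^+ 2 / (1 - S).
  apply: cvgM; first exact: cvg_cst.
  apply: cvgV; first by rewrite gt_eqF.
  apply: cvgB; first exact: cvg_cst.
  apply: cvg_bigsum => k; exact: (proj2 (alpha_sup k i)).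
rewrite -(cvg_lim _ h2) ?(cvg_lim _ h3) //; exact: norm_hausdorff.
Qed.

Lemma conv_fix i j : bp_alpha r i j * (1 - bp_alpha_excl r i j) = r i j ^+ 2.
Proof.
have [hp ->] := alpha_fix i j; rewrite /bp_alpha_excl.
by rewrite divfK // gt_eqF.
Qed.

Lemma conv_d i j : 1 - bp_alpha_excl r i j != 0.
Proof. by have [hp _] := alpha_fix i j; rewrite gt_eqF. Qed.

Lemma conv_s i : 1 - \sum_(k | nbr r i k) bp_alpha r k i != 0.
Proof.
apply: lt0r_neq0.
have h : \sum_(k | nbr r i k) bp_alpha r k i <= (v i - 1) / v i.
  rewrite -sum_beta (bigID (fun k => nbr r i k) predT) /=.
  rewrite -[X in X <= _]addr0; apply: lerD.
    by apply: ler_sum => k _; case/andP: (alpha_bnd k i).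
  by apply: sumr_ge0 => k _; exact: beta_ge0.
have vi := vpos i.
have : (v i - 1) / v i < 1 by rewrite ltr_pdivrMr // mul1r ltrBlDr ltrDl.
lra.
Qed.
End Conv.


Lemma modC_ge0 (R : realType) (z : R[i]) : 0 <= modC z.
Proof. exact: sqrtr_ge0. Qed.

Lemma spec_ub (R : realType) n (B : 'M[R]_n) :
  has_ubound [set x : R | exists z : R[i], eigenvalueC B z /\ x = modC z].
Proof.
set p := char_poly (map_mx (fun x : R => (x%:C)%C) B).
have [rs hp] := closed_field_poly_normal p.
have lc : lead_coef p = 1 by apply/monicP; exact: char_poly_monic.
exists (\sum_(w <- rs) modC w) => _ [z [hz ->]].
have : z \in rs.
  by move: hz; rewrite /eigenvalueC -/p hp lc scale1r root_prod_XsubC.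
move=> zin; rewrite (big_rem z) //= lerDl.
by apply: sumr_ge0 => w _; exact: modC_ge0.
Qed.

Lemma spec_det (R : realType) n (B : 'M[R]_n) :
  spectral_radius B < 1 -> forall t, 0 <= t <= 1 -> \det (1%:M - t *: B) != 0.
Proof.
move=> hs t /andP[t0 t1]; apply/eqP => hd.
have tpos : 0 < t.
  rewrite lt_neqAle t0 andbT; apply/eqP => t0'.
  by move: hd; rewrite -t0' scale0r subr0 det1; apply/eqP; exact: oner_neq0.
set l := t^-1.
have hl : \det (l%:M - B) = 0.
  have -> : l%:M - B = l *: (1%:M - t *: B).
    by rewrite scalerBr scalemx1 scalerA mulVf ?gt_eqF // scale1r.
  by rewrite detZ hd mulr0.
have hroot : root (char_poly B) l.
  rewrite -eigenvalue_root_char; apply/eigenvalueP.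
  have /det0P [v vn hv] : \det (l%:M - B) == 0 by rewrite hl.
  exists v => //; move: hv; rewrite mulmxBr mul_mx_scalar.
  by move/eqP; rewrite subr_eq0 => /eqP ->.
have hC : eigenvalueC B (l%:C)%C.
  by rewrite /eigenvalueC -(map_char_poly (real_complex R)); exact: rmorph_root.
have hmod : modC (l%:C)%C = l.
  rewrite /modC /= expr0n /= addr0 sqrtr_sqr ger0_norm //.
  by rewrite /l invr_ge0 ltW.
have : l <= spectral_radius B.
  by apply: ub_le_sup; [exact: spec_ub | exists (l%:C)%C].
have : 1 <= l by rewrite /l invf_ge1.
lra.
Qed.
Lemma seq_min0 (R : realType) (s : seq R) (a : R) :
  exists2 m, m \in a :: s & forall y, y \in a :: s -> m <= y.
Proof.
elim: s a => [|b s IH] a.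
  by exists a; rewrite ?inE // => y; rewrite inE => /eqP ->.
have [m ms hm] := IH b.
case: (leP a m) => am.
  exists a; first exact: mem_head.
  by move=> y; rewrite inE => /orP[/eqP ->//|/hm]; exact: le_trans.
exists m; first by rewrite inE ms orbT.
by move=> y; rewrite inE => /orP[/eqP ->|/hm//]; exact: ltW.
Qed.

Lemma seq_min (R : realType) (s : seq R) x : x \in s ->
  exists2 m, m \in s & forall y, y \in s -> m <= y.
Proof. by case: s => [//|a s] _; exact: seq_min0. Qed.

Lemma min_root (R : realType) (p : {poly R}) x : p != 0 -> 0 <= x -> root p x ->
  exists2 m, 0 <= m <= x & root p m /\ forall y, 0 <= y -> y < m -> ~~ root p y.
Proof.
move=> p0 x0 rx.
have hR := roots_on_rootsR p0.
have inR y : root p y = (y \in rootsR p) by rewrite -hR in_itv.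
set s := [seq y <- rootsR p | 0 <= y].
have xs : x \in s by rewrite mem_filter x0 -inR.
have [m ms hm] := seq_min xs.
move: ms; rewrite mem_filter => /andP[m0 ms].
exists m; first by rewrite m0 hm.
split; first by rewrite inR.
move=> y y0 ym; apply/negP; rewrite inR => ys.
have : m <= y by apply: hm; rewrite mem_filter y0.
by rewrite leNgt ym.
Qed.

Section Pos.
Variables (R : realType) (n : nat) (B : 'M[R]_n).
Hypothesis Bpos : forall i j, 0 <= B i j.
Hypothesis Hdet : forall t, 0 <= t <= 1 -> \det (1%:M - t *: B) != 0.

Definition Ap : 'M[{poly R}]_n := 1%:M - 'X *: map_mx polyC B.
Definition Dp := \det Ap.
Definition Np i := \sum_j (\adj Ap) i j.

Lemma keyP i : Np i = Dp + 'X * \sum_k (B i k)%:P * Np k.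
Proof.
have := congr1 (fun M : 'M[{poly R}]_n => \sum_j M i j) (mul_mx_adj Ap) => /=.
under eq_bigr do rewrite mxE.
rewrite exchange_big /=.
under eq_bigr do rewrite -mulr_sumr.
move=> h.
have hD : \sum_j ((\det Ap)%:M : 'M[{poly R}]_n) i j = Dp.
  rewrite (eq_bigr (fun j => (i == j)%:R * Dp)); first exact: sum_delta.
  by move=> j _; rewrite mxE mulr_natl.
rewrite -hD -h.
have -> : \sum_k Ap i k * Np k =
   \sum_k (i == k)%:R * Np k - 'X * \sum_k (B i k)%:P * Np k.
  rewrite mulr_sumr -sumrB; apply: eq_bigr => k _.
  by rewrite !mxE mulr_natl; ring.
by rewrite sum_delta; ring.
Qed.

Lemma evalA t : map_mx (horner_eval t) Ap = 1%:M - t *: B.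
Proof.
apply/matrixP => i j; rewrite !mxE /= horner_evalE.
by rewrite hornerD hornerN hornerM hornerX hornerC hornerMn hornerC.
Qed.

Lemma evalD t : Dp.[t] = \det (1%:M - t *: B).
Proof. by rewrite -evalA det_map_mx /= horner_evalE. Qed.

Lemma keyE i t : (Np i).[t] = Dp.[t] + t * \sum_k B i k * (Np k).[t].
Proof.
rewrite {1}keyP hornerD hornerM hornerX; congr (_ + _ * _).
by rewrite horner_sum; apply: eq_bigr => k _; rewrite hornerM hornerC.
Qed.

Lemma D0 : Dp.[0] = 1.
Proof. by rewrite evalD scale0r subr0 det1. Qed.

Lemma N0 i : (Np i).[0] = 1.
Proof. by rewrite keyE mul0r addr0 D0. Qed.

Lemma Dpos t : 0 <= t <= 1 -> 0 < Dp.[t].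
Proof.
move=> /andP[t0 t1]; rewrite ltNge; apply/negP => ht.
have [x /andP[x0 xt] rx] : exists2 x, 0 <= x <= t & root (- Dp) x.
  by apply: poly_ivt => //; rewrite !hornerN D0 oppr_le0 ler01 oppr_ge0 ht.
move: rx; rewrite rootN => /rootP; rewrite evalD => /eqP.
by apply/negP; apply: Hdet; rewrite x0 (le_trans xt).
Qed.

Lemma N_nonneg_or_root i t : 0 <= t -> (Np i).[t] < 0 ->
  exists2 x, 0 <= x < t & root (Np i) x.
Proof.
move=> t0 ht.
have [x /andP[x0 xt] rx] : exists2 x, 0 <= x <= t & root (- Np i) x.
  by apply: poly_ivt => //; rewrite !hornerN N0 oppr_le0 ler01 oppr_ge0 ltW.
move: rx; rewrite rootN => rx; exists x => //; rewrite x0 lt_neqAle xt andbT.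
by apply: contraTneq rx => ->; rewrite /root lt_eqF.
Qed.

Definition Pp := \prod_i Np i.

Lemma rootPp x : root Pp x = [exists i, root (Np i) x].
Proof.
rewrite /root /Pp horner_prod prodf_seq_eq0.
apply/hasP/existsP => [[i _ /= hi]|[i hi]]; first by exists i.
by exists i => //; rewrite mem_index_enum.
Qed.

Lemma Pp_noroot t : 0 <= t <= 1 -> ~~ root Pp t.
Proof.
move=> /andP[t0 t1]; apply/negP => rt.
have P0 : Pp != 0.
  apply/eqP => h; have := congr1 (fun p => p.[0]) h => /=.
  rewrite /Pp horner_prod hornerC (eq_bigr (fun _ => 1)); last by move=> i _; rewrite N0.
  by rewrite prodr_const expr1n; apply/eqP; exact: oner_neq0.
have [m /andP[m0 mt] [rm hmin]] := min_root P0 t0 rt.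
have Nm i : 0 <= (Np i).[m].
  rewrite leNgt; apply/negP => hneg.
  have [x /andP[x0 xm] rx] := N_nonneg_or_root m0 hneg.
  have := hmin x x0 xm; rewrite rootPp; apply/negP/negPn/existsP; by exists i.
have Dm : 0 < Dp.[m] by apply: Dpos; rewrite m0 (le_trans mt).
move: rm; rewrite rootPp => /existsP[i /rootP hi].
have := keyE i m; rewrite hi => h.
have : 0 <= m * \sum_k B i k * (Np k).[m].
  by rewrite mulr_ge0 // sumr_ge0 // => k _; rewrite mulr_ge0.
lra.
Qed.

Lemma pos_vec : exists v : 'I_n -> R, (forall i, 0 < v i) /\
  forall i, v i = 1 + \sum_j B i j * v j.
Proof.
have D1 : 0 < Dp.[1] by apply: Dpos; rewrite ler01 lexx.
have N1 i : 0 < (Np i).[1].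
  rewrite ltNge le_eqVlt negb_or; apply/andP; split.
    apply/negP => /eqP h; have := Pp_noroot (t := 1); rewrite ler01 lexx => /(_ isT).
    by rewrite rootPp; apply/negP/negPn/existsP; exists i; apply/rootP.
  apply/negP => hneg.
  have [x /andP[x0 x1] rx] := N_nonneg_or_root ler01 hneg.
  have := Pp_noroot (t := x); rewrite x0 ltW //= => /(_ isT).
  by rewrite rootPp; apply/negP/negPn/existsP; exists i.
exists (fun i => (Np i).[1] / Dp.[1]); split.
  by move=> i; rewrite divr_gt0.
move=> i; rewrite keyE mul1r.
rewrite [X in _ = 1 + X](eq_bigr (fun j => B i j * (Np j).[1] / Dp.[1])); last by move=> j _; rewrite mulrA.
rewrite -mulr_suml; field; by rewrite gt_eqF.
Qed.
End Pos.

Theorem theorem5 (R : realType) (n : nat) (r : 'M[R]_n) :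
  r^T = r ->
  (forall i, r i i = 0) ->
  spectral_radius (absmx r) < 1 ->
  (\det (1%:M - r))^-1 = Zbp r * (\det (1%:M - Rprime r))^-1.
Proof.
move=> hT hd hs.
have Hsym : forall i j, r i j = r j i by move=> i j; rewrite -{1}hT mxE.
have Bpos : forall i j, 0 <= absmx r i j by move=> i j; rewrite mxE.
have [v [vpos vfix]] := pos_vec Bpos (spec_det hs).
have vfix' : forall i, v i = 1 + \sum_j `|r i j| * v j.
  by move=> i; rewrite vfix; under eq_bigr do rewrite mxE.
apply: (final_alg Hsym hd).
- move=> i j _; exact: (conv_fix Hsym vpos vfix').
- move=> i j _; exact: (conv_d Hsym vpos vfix').
- exact: (conv_s Hsym vpos vfix').
Qed.
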